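(* Let $f_0:\mathbb{R}^n\to\mathbb{R}$ be lower semicontinuous, proper and strictly convex, let $\mathcal{Y}\subseteq\mathbb{R}^n$ be convex and compact, let $f=f_0+\delta_{\mathcal{Y}}$, and let $\mathbf{A}\in\mathbb{R}^{m\times n}$ with $m<n$ and $\operatorname{rank}\mathbf{A}=m$, and $\mathbf{b}\in\mathbb{R}^m$. Assume that for every $\bar{\mathbf{y}}\in\operatorname{bnd}\mathcal{Y}$ there exist a sequence $(\mathbf{y}_k)$ in $\mathcal{Y}$ with $\mathbf{y}_k\to\bar{\mathbf{y}}$ and subgradients $\boldsymbol{\nu}_k\in\partial f(\mathbf{y}_k)$ with $\limsup_k\|\boldsymbol{\nu}_k\|_2<\infty$. Let $\mathcal{V}=\operatorname{cl}\{\boldsymbol{\nu}\in\partial f_0(\mathbf{y}) \;|\; \mathbf{y}\in\operatorname{int}\mathcal{Y}\}$, and assume there exist $\boldsymbol{\nu}\in\mathbb{R}^n\setminus\operatorname{int}\mathcal{V}$ and $\boldsymbol{\eta}\in\mathbb{R}^n$ such that for all $\alpha\ge0$: $\boldsymbol{\nu}+\alpha\boldsymbol{\eta}\in\mathbb{R}^n\setminus\operatorname{int}\mathcal{V}$, $\nabla f^*(\boldsymbol{\nu}+\alpha\boldsymbol{\eta})$ does not depend on $\alpha$, and the ray $\{\boldsymbol{\nu}+\alpha\boldsymbol{\eta}\mid\alpha\ge0\}$ is contained in the range $R(\mathbf{A}^{\mathsf T})$ of $\mathbf{A}^{\mathsf T}$. Let $g:\mathbb{R}^m\to\mathbb{R}$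 be the dual function $$g(\boldsymbol{\lambda})=\inf_{\mathbf{y}\in\mathbb{R}^n}\big(f(\mathbf{y})-\boldsymbol{\lambda}^{\mathsf T}(\mathbf{A}\mathbf{y}-\mathbf{b})\big)=-f^*(\mathbf{A}^{\mathsf T}\boldsymbol{\lambda})+\mathbf{b}^{\mathsf T}\boldsymbol{\lambda}.$$ Then there exist $\boldsymbol{\lambda}\in\mathbb{R}^m$ and $\boldsymbol{\mu}\in\mathbb{R}^m$ such that $\nabla g(\boldsymbol{\lambda}+\alpha\boldsymbol{\mu})$ is the same vector for all $\alpha\ge0$.
   Context: $\delta_{\mathcal{Y}}$ is the indicator function of $\mathcal{Y}$; $f^*(\boldsymbol{\nu})=\sup_{\mathbf{x}\in\operatorname{dom}f}(\boldsymbol{\nu}^{\mathsf T}\mathbf{x}-f(\mathbf{x}))$ is the convex conjugate of $f$, which under these hypotheses is finite and differentiable on $\mathbb{R}^n$ (so $g$ is differentiable). $\partial$ is the convex subdifferential; $\operatorname{cl},\operatorname{int},\operatorname{bnd}$ denote closure, interior, boundary. *)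

(* Defs.v *)
From HB Require Import structures.
From mathcomp Require Import all_boot all_order all_algebra.
From mathcomp Require Import all_classical all_reals all_analysis.
Set Implicit Arguments. Unset Strict Implicit. Unset Printing Implicit Defensive.
Import Order.TTheory GRing.Theory Num.Theory.
Import numFieldNormedType.Exports.
Local Open Scope classical_set_scope.
Local Open Scope ring_scope.

Section Defs.
Variable R : realType.

Definition dotv n (u v : 'cV[R]_n) : R := \sum_(i < n) u i 0 * v i 0.
Definition norm2 n (v : 'cV[R]_n) : R := Num.sqrt (dotv v v).

Definition strictly_convex n (f : 'cV[R]_n -> R) :=
  forall x y (t : R), x != y -> 0 < t -> t < 1 ->
    f (t *: x + (1 - t) *: y) < t * f x + (1 - t) * f y.

Definition convex_setv n (Y : set 'cV[R]_n) :=
  forall x y (t : R), Y x -> Y y -> 0 <= t -> t <= 1 ->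
    Y (t *: x + (1 - t) *: y).

Definition indic_sum n (f0 : 'cV[R]_n -> R) (Y : set 'cV[R]_n) :
  'cV[R]_n -> \bar R :=
  fun y => if `[< Y y >] then (f0 y)%:E else +oo%E.

Definition subdiff n (F : 'cV[R]_n -> \bar R) (y : 'cV[R]_n) : set 'cV[R]_n :=
  [set nu | F y \is a fin_num /\
            forall x, (F y + (dotv nu (x - y))%:E <= F x)%E].

(* convex conjugate  f^*(nu) = sup_{x in dom F} (nu^T x - F x), as a real number
   (it is finite under the hypotheses of the statement) *)
Definition conj_fun n (F : 'cV[R]_n -> \bar R) (nu : 'cV[R]_n) : R :=
  fine (ereal_sup [set ((dotv nu x)%:E - F x)%E | x in [set x | F x \is a fin_num]]).

Definition dual_fun m n (F : 'cV[R]_n -> \bar R) (A : 'M[R]_(m, n))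
  (b : 'cV[R]_m) (lam : 'cV[R]_m) : R :=
  fine (ereal_inf [set (F y - (dotv lam (A *m y - b))%:E)%E | y in setT]).

Definition is_gradient n (F : 'cV[R]_n -> R) (x G : 'cV[R]_n) :=
  forall eps : R, 0 < eps -> exists2 delta : R, 0 < delta &
    forall h, norm2 h < delta ->
      `|F (x + h) - F x - dotv G h| <= eps * norm2 h.

End Defs.

(* Main.v *)
Require Import Defs.
From HB Require Import structures.
From mathcomp Require Import all_boot all_order all_algebra.
From mathcomp Require Import all_classical all_reals all_analysis.
Import Order.TTheory GRing.Theory Num.Theory.
Import numFieldNormedType.Exports.
Local Open Scope classical_set_scope.
Local Open Scope ring_scope.
From mathcomp Require Import lra ring.
Lemma lsc_lb (R : realType) (T : topologicalType) (K : set T) (phi : T -> R) :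
  compact K -> lower_semicontinuous (fun y => (phi y)%:E) ->
  exists M, forall y, K y -> M <= phi y.
Proof.
rewrite compact_near_coveringP => cov lsc.
have H : forall x, K x -> \forall x' \near x & i \near (pinfty_nbhs R), - i < phi x'.
  move=> x Kx.
  have h1 : ((phi x - 1)%:E < (phi x)%:E)%E by rewrite lte_fin ltrBlDr ltrDl.
  have [V Vx HV] := lsc x (phi x - 1) h1.
  exists (V, [set M | 1 - phi x < M]) => /=.
    split => //. exists (1 - phi x); split; first by rewrite num_real.
    by [].
  case=> y M /= [Vy HM]. have := HV y Vy; rewrite lte_fin => h.
  lra.
have [M0 [_ HM]] := cov R (pinfty_nbhs R) (fun M y => - M < phi y) _ H.
exists (- (M0 + 1)) => y Ky.
have := HM (M0 + 1) _ y Ky.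
rewrite ltrDl ltr01 => /(_ isT) h. lra.
Qed.
Lemma coord_le_norm (R : realType) n (y : 'cV[R]_n) i : `|y i 0| <= `|y|.
Proof.
have -> : `|y| = mx_norm y by []. rewrite mx_normrE.
apply: le_trans (le_bigmax _ _ (i, 0)) => //.
Qed.
Lemma Ybd (R : realType) n (Y : set 'cV[R]_n) : compact Y -> exists B, forall y, Y y -> `|y| <= B.
Proof.
move=> /compact_bounded [B0 [_ HB]].
exists (B0 + 1) => y Yy. by apply: (HB (B0+1) _ y Yy); rewrite ltrDl.
Qed.
Lemma dot_bd (R : realType) n (nu y : 'cV[R]_n) : `|dotv nu y| <= (\sum_i `|nu i 0|) * `|y|.
Proof.
rewrite /dotv mulr_suml; apply: le_trans (ler_norm_sum _ _ _) _.
apply: ler_sum => i _; rewrite normrM; apply: ler_wpM2l => //.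
exact: coord_le_norm.
Qed.
Section N.
Variable R : realType.
Lemma norm2_ge0 n (v : 'cV[R]_n) : 0 <= norm2 v.
Proof. exact: sqrtr_ge0. Qed.
Lemma coord_le_norm2 n (v : 'cV[R]_n) i : `|v i 0| <= norm2 v.
Proof.
rewrite -sqrtr_sqr /norm2 /dotv; apply: ler_wsqrtr.
rewrite (bigD1 i) //= expr2 ler_wpDr //.
by apply: sumr_ge0 => j _; rewrite -expr2 sqr_ge0.
Qed.
Lemma norm2_le_sum n (v : 'cV[R]_n) : norm2 v <= \sum_i `|v i 0|.
Proof.
have [H0 H1] : 0 <= \sum_i `|v i 0| /\ dotv v v <= (\sum_i `|v i 0|) ^+ 2.
  rewrite /dotv; elim/big_rec2: _ => [|i y1 y2 _ [Hy2 Hy]]; first by rewrite expr0n.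
  split; first by rewrite addr_ge0.
  have Ha : 0 <= `|v i 0| by [].
  have -> : v i 0 * v i 0 = `|v i 0| ^+ 2 by rewrite real_normK ?num_real // expr2.
  nra.
rewrite -(ger0_norm H0) -sqrtr_sqr; exact: ler_wsqrtr.
Qed.
Lemma norm2_mul m n (M : 'M[R]_(m, n)) (h : 'cV[R]_n) :
  norm2 (M *m h) <= (1 + \sum_j \sum_i `|M j i|) * norm2 h.
Proof.
apply: le_trans (norm2_le_sum _ _) _.
apply: (@le_trans _ _ ((\sum_j \sum_i `|M j i|) * norm2 h)); last first.
  rewrite ler_wpM2r ?norm2_ge0 // lerDr //.
rewrite mulr_suml; apply: ler_sum => j _; rewrite mxE mulr_suml.
apply: le_trans (ler_norm_sum _ _ _) _; apply: ler_sum => i _.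
rewrite normrM ler_wpM2l //; exact: coord_le_norm2.
Qed.
Lemma dotvC n (u v : 'cV[R]_n) : dotv u v = dotv v u.
Proof. by apply: eq_bigr => i _; rewrite mulrC. Qed.
Lemma dotvDl n (u w v : 'cV[R]_n) : dotv (u + w) v = dotv u v + dotv w v.
Proof. by rewrite /dotv -big_split; apply: eq_bigr => i _; rewrite mxE mulrDl. Qed.
Lemma dotvBr n (u w v : 'cV[R]_n) : dotv v (u - w) = dotv v u - dotv v w.
Proof. by rewrite /dotv -sumrB; apply: eq_bigr => i _; rewrite !mxE mulrBr. Qed.
Lemma dotv_tr m n (A : 'M[R]_(m, n)) lam y : dotv lam (A *m y) = dotv (A^T *m lam) y.
Proof.
rewrite /dotv. under eq_bigr do rewrite mxE big_distrr.
under [RHS]eq_bigr do rewrite mxE big_distrl.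
rewrite exchange_big /=; apply: eq_bigr => j _; apply: eq_bigr => i _.
by rewrite mxE; ring.
Qed.
Lemma indicY n (f0 : 'cV[R]_n -> R) (Y : set 'cV[R]_n) y : Y y -> indic_sum f0 Y y = (f0 y)%:E.
Proof. by move=> Yy; rewrite /indic_sum asboolT. Qed.
Lemma indicnY n (f0 : 'cV[R]_n -> R) (Y : set 'cV[R]_n) y : ~ Y y -> indic_sum f0 Y y = +oo%E.
Proof. by move=> Yy; rewrite /indic_sum asboolF. Qed.

Lemma conj_props n (f0 : 'cV[R]_n -> R) (Y : set 'cV[R]_n) nu c :
  Y !=set0 -> (forall y, Y y -> dotv nu y - f0 y <= c) ->
  (forall y, Y y -> dotv nu y - f0 y <= conj_fun (indic_sum f0 Y) nu) /\
  (forall e, 0 < e -> exists2 y, Y y & conj_fun (indic_sum f0 Y) nu - e < dotv nu y - f0 y).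
Proof.
move=> [y0 Yy0] Hc.
pose S := [set ((dotv nu x)%:E - indic_sum f0 Y x)%E | x in [set x | indic_sum f0 Y x \is a fin_num]].
have memS : forall y, Y y -> S (dotv nu y - f0 y)%:E.
  move=> y Yy; exists y; first by rewrite /= indicY.
  by rewrite indicY.
have Sfin : forall s, S s -> exists2 y, Y y & s = (dotv nu y - f0 y)%:E.
  move=> s [x /= Fx <-]; case: (pselect (Y x)) => Yx.
    by exists x => //; rewrite indicY.
  by move: Fx; rewrite indicnY.
have ub : (ereal_sup S <= c%:E)%E.
  by apply: ub_ereal_sup => s /Sfin [y Yy ->]; rewrite lee_fin Hc.
have lb : ((dotv nu y0 - f0 y0)%:E <= ereal_sup S)%E by apply: ereal_sup_ubound; exact: memS.
have fs : ereal_sup S = (conj_fun (indic_sum f0 Y) nu)%:E.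
  rewrite /conj_fun -/S fineK // fin_numElt; apply/andP; split.
    exact: lt_le_trans (ltNyr _) lb.
  exact: le_lt_trans ub (ltry _).
split.
  move=> y Yy; rewrite -lee_fin -fs; apply: ereal_sup_ubound; exact: memS.
move=> e e0.
have : ((conj_fun (indic_sum f0 Y) nu - e)%:E < ereal_sup S)%E.
  by rewrite fs lte_fin ltrBlDr ltrDl.
move=> /ereal_sup_gt [s /Sfin [y Yy ->]]; rewrite lte_fin => h.
by exists y.
Qed.

Lemma dual_eq m n (f0 : 'cV[R]_n -> R) (Y : set 'cV[R]_n) (A : 'M[R]_(m, n)) b lam c :
  Y !=set0 -> (forall y, Y y -> dotv (A^T *m lam) y - f0 y <= c) ->
  dual_fun (indic_sum f0 Y) A b lam = dotv lam b - conj_fun (indic_sum f0 Y) (A^T *m lam).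
Proof.
move=> Yne Hc; have [P1 P2] := @conj_props n f0 Y _ c Yne Hc.
set s := conj_fun _ _.
have key : forall y, dotv lam (A *m y - b) = dotv (A^T *m lam) y - dotv lam b.
  by move=> y; rewrite dotvBr dotv_tr.
rewrite /dual_fun; set T := ereal_inf _.
suff -> : T = (dotv lam b - s)%:E by [].
rewrite {}/T.
apply/le_anti/andP; split.
  apply/lee_addgt0Pr => e e0.
  have [y Yy hy] := P2 e e0.
  apply: (@le_trans _ _ (indic_sum f0 Y y - (dotv lam (A *m y - b))%:E)%E).
    by apply: ereal_inf_lbound; exists y.
  rewrite indicY // -EFinD; change ((f0 y - dotv lam (A *m y - b))%:E <= (dotv lam b - s + e)%:E)%E; rewrite lee_fin key /s; lra.
apply: le_ereal_inf_tmp => t [y _ <-].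
case: (pselect (Y y)) => Yy.
  rewrite indicY //; change ((dotv lam b - s)%:E <= (f0 y - dotv lam (A *m y - b))%:E)%E; rewrite lee_fin key /s; have := P1 y Yy; lra.
by rewrite indicnY //= leey.
Qed.
End N.
Arguments dot_bd {R n}.
Arguments norm2_mul {R m n}.
Arguments dotvC {R n}.
Arguments dotvDl {R n}.
Arguments dotvBr {R n}.
Arguments dotv_tr {R m n}.
Arguments dual_eq {R m n f0 Y A b lam c}.
Theorem corollary1 (R : realType) (m n : nat)
  (f0 : 'cV[R]_n -> R) (Y : set 'cV[R]_n)
  (A : 'M[R]_(m, n)) (b : 'cV[R]_m)
  (Hf0lsc : lower_semicontinuous (fun y => (f0 y)%:E))
  (Hf0sc : strictly_convex f0)
  (HYconv : convex_setv Y) (HYcpt : compact Y) (HYne : Y !=set0)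
  (Hmn : (m < n)%N) (HrkA : \rank A = m)
  (Hbnd : forall ybar, (closure Y `\` Y°) ybar ->
     exists (yk nuk : nat -> 'cV[R]_n),
       [/\ forall k, Y (yk k),
           yk @ \oo --> ybar,
           forall k, subdiff (indic_sum f0 Y) (yk k) (nuk k)
         & exists M : R, \forall k \near \oo, norm2 (nuk k) <= M])
  (nu eta : 'cV[R]_n)
  (Heta : eta != 0)
  (Hray : forall alpha : R, 0 <= alpha ->
     ~ (closure [set v | exists2 y, Y° y & subdiff (fun x => (f0 x)%:E) y v])°
         (nu + alpha *: eta)
     /\ (exists lam : 'cV[R]_m, nu + alpha *: eta = A^T *m lam))
  (Hgradconst : exists G : 'cV[R]_n, forall alpha : R, 0 <= alpha ->
     is_gradient (conj_fun (indic_sum f0 Y)) (nu + alpha *: eta) G) :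
  exists (lam mu : 'cV[R]_m), mu != 0 /\
    exists G : 'cV[R]_m, forall alpha : R, 0 <= alpha ->
      is_gradient (dual_fun (indic_sum f0 Y) A b) (lam + alpha *: mu) G.
Proof.
have [Bf Hf] := @lsc_lb R _ Y f0 HYcpt Hf0lsc.
have [BY HBY] := @Ybd R n Y HYcpt.
have Hc : forall v, exists c, forall y, Y y -> dotv v y - f0 y <= c.
  move=> v; exists ((\sum_i `|v i 0|) * BY - Bf) => y Yy.
  have h1 := dot_bd v y; have h2 := HBY y Yy; have h3 := Hf y Yy.
  have h4 : (\sum_i `|v i 0|) * `|y| <= (\sum_i `|v i 0|) * BY.
    by rewrite ler_wpM2l // sumr_ge0.
  have h5 := ler_norm (dotv v y).
  lra.
have geq : forall lam, dual_fun (indic_sum f0 Y) A b lam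
    = dotv lam b - conj_fun (indic_sum f0 Y) (A^T *m lam).
  move=> lam; have [c Hc'] := Hc (A^T *m lam); exact: dual_eq HYne Hc'.
have [_ [lam0 E0]] := Hray 0 (lexx 0). rewrite scale0r addr0 in E0.
have [_ [lam1 E1]] := Hray 1 ler01. rewrite scale1r in E1.
have [G HG] := Hgradconst.
exists lam0, (lam1 - lam0); split.
  apply: contraNneq Heta => h.
  have : A^T *m (lam1 - lam0) = 0 by rewrite h mulmx0.
  by rewrite mulmxBr -E1 -E0 (addrC nu) addrK => ->.
exists (b - A *m G) => alpha a0 eps eps0.
have Ex : A^T *m (lam0 + alpha *: (lam1 - lam0)) = nu + alpha *: eta.
  by rewrite mulmxDr -scalemxAr mulmxBr -E1 -E0 (addrC nu eta) addrK.
pose C := 1 + \sum_j \sum_i `|(A^T) j i|.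
have C0 : 0 < C.
  have : 0 <= \sum_j \sum_i `|(A^T) j i| by apply: sumr_ge0 => j _; apply: sumr_ge0.
  rewrite /C; lra.
have [d d0 Hd] := HG alpha a0 (eps / C) (divr_gt0 eps0 C0).
exists (d / C); first exact: divr_gt0.
move=> h hh.
have nA : norm2 (A^T *m h) <= C * norm2 h := norm2_mul (A^T) h.
have hlt : norm2 (A^T *m h) < d.
  apply: le_lt_trans nA _.
  have -> : d = C * (d / C) by field; rewrite gt_eqF.
  by rewrite ltr_pM2l.
have hd := Hd (A^T *m h) hlt.
have h3 : eps / C * norm2 (A^T *m h) <= eps * norm2 h.
  apply: le_trans (_ : eps / C * (C * norm2 h) <= _).
    by rewrite ler_wpM2l // divr_ge0 // ltW.
  have -> : eps / C * (C * norm2 h) = eps * norm2 h by field; rewrite gt_eqF.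
  by [].
rewrite !geq mulmxDr Ex.
rewrite dotvDl (dotvC (b - A *m G)) dotvBr dotv_tr (dotvC (A^T *m h) G).
move: hd; rewrite !ler_norml => /andP[k1 k2].
apply/andP; split; lra.
Qed.
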